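(* Let $p\in A^m$, $A=\mathbb C[t_1,\dots,t_n]$, with $p\neq0$, and let $R$ be a matrix over $\mathcal W_n$ whose rows generate $\ker(\kappa_p)$. Then the VMPUM $\{g\in C^\infty(\mathbb R^n,\mathbb C)^m: R\bullet g=0\}$ of $\{p\}$ equals $\{c\,p: c\in\mathbb C\}$; in particular it is a one-dimensional $\mathbb C$-vector space.
   Context: $\mathcal W_n$ is the $n$-th Weyl algebra $\mathbb C[t_1,\dots,t_n]\langle\partial_1,\dots,\partial_n\rangle$ with $\partial_it_j=t_j\partial_i+\delta_{ij}$, acting on $C^\infty(\mathbb R^n,\mathbb C)$ (which contains the polynomial functions $A$) by $\partial_i\bullet f=\partial f/\partial t_i$ and multiplication by $t_i$. For a matrix $R\in\mathcal W_n^{r\times m}$, $(R\bullet g)_i=\sum_jR_{ij}\bullet g_j$. For $p\in A^m$, $\ker(\kappa_p)=\{a\in\mathcal W_n^{1\times m}:\sum_ia_i\bullet p_i=0\}$. *)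

(* Defs.v *)
From Stdlib Require Import Reals List ClassicalEpsilon.
Open Scope R_scope.

Definition Cpx : Type := (R * R)%type.
Definition C0 : Cpx := (0, 0).
Definition C1 : Cpx := (1, 0).
Definition RtoC (r : R) : Cpx := (r, 0).
Definition Cadd (a b : Cpx) : Cpx := (fst a + fst b, snd a + snd b).
Definition Cneg (a : Cpx) : Cpx := (- fst a, - snd a).
Definition Cmul (a b : Cpx) : Cpx :=
  (fst a * fst b - snd a * snd b, fst a * snd b + snd a * fst b).
Definition cnorm (z : Cpx) : R := Rabs (fst z) + Rabs (snd z).

(** * Functions R^n -> Cpx.  A point of R^n is represented by [x : nat -> R],
    only the coordinates [x 0, ..., x (n-1)] being relevant (see [supported]). *)
Definition pt : Type := nat -> R.
Definition fn : Type := pt -> Cpx.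

Definition supported (n : nat) (f : fn) : Prop :=
  forall x y : pt, (forall j, (j < n)%nat -> x j = y j) -> f x = f y.

Definition upd (x : pt) (i : nat) (h : R) : pt :=
  fun j => if Nat.eqb j i then x j + h else x j.

Definition has_pd (f : fn) (i : nat) (x : pt) (l : Cpx) : Prop :=
  derivable_pt_lim (fun h => fst (f (upd x i h))) 0 (fst l) /\
  derivable_pt_lim (fun h => snd (f (upd x i h))) 0 (snd l).

(** The partial derivative d f / d t_i (meaningful where it exists). *)
Definition pd (f : fn) (i : nat) : fn :=
  fun x => epsilon (inhabits C0) (has_pd f i x).

Definition cont (n : nat) (f : fn) : Prop :=
  forall x eps, 0 < eps -> exists del, 0 < del /\
    forall y : pt, (forall j, (j < n)%nat -> Rabs (y j - x j) < del) ->
      cnorm (Cadd (f y) (Cneg (f x))) < eps.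

Fixpoint iter_ok (n : nat) (l : list nat) (f : fn) : Prop :=
  match l with
  | nil => cont n f
  | i :: l' => (forall x, exists d, has_pd f i x d) /\ iter_ok n l' (pd f i)
  end.

Definition smooth (n : nat) (f : fn) : Prop :=
  supported n f /\
  forall l : list nat, Forall (fun i => (i < n)%nat) l -> iter_ok n l f.

(** * The Weyl algebra W_n, presented by generators: constants, t_i, d_i,
    sums and products.  Two terms denote the same element of W_n iff they
    act identically on C^infty(R^n,C) (the action is faithful). *)
Inductive wterm : Type :=
| WC (c : Cpx)
| WT (i : nat)
| WD (i : nat)
| WAdd (a b : wterm)
| WMul (a b : wterm).

Fixpoint wf (n : nat) (w : wterm) : Prop :=
  match w with
  | WC _ => True
  | WT i => (i < n)%nat
  | WD i => (i < n)%nat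
  | WAdd a b => wf n a /\ wf n b
  | WMul a b => wf n a /\ wf n b
  end.

(** Terms without d_i: elements of A = C[t_1..t_n]. *)
Fixpoint is_poly (w : wterm) : Prop :=
  match w with
  | WC _ => True
  | WT _ => True
  | WD _ => False
  | WAdd a b => is_poly a /\ is_poly b
  | WMul a b => is_poly a /\ is_poly b
  end.

Fixpoint act (w : wterm) (f : fn) : fn :=
  match w with
  | WC c => fun x => Cmul c (f x)
  | WT i => fun x => Cmul (RtoC (x i)) (f x)
  | WD i => pd f i
  | WAdd a b => fun x => Cadd (act a f x) (act b f x)
  | WMul a b => act a (act b f)
  end.

Definition weq (n : nat) (a b : wterm) : Prop :=
  forall f : fn, smooth n f -> forall x, act a f x = act b f x.

Definition polyfun (q : wterm) : fn := act q (fun _ => C1).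

Fixpoint wsum (r : nat) (w : nat -> wterm) : wterm :=
  match r with
  | O => WC C0
  | S r' => WAdd (wsum r' w) (w r')
  end.

Fixpoint rowact (m : nat) (a : nat -> wterm) (g : nat -> fn) : fn :=
  match m with
  | O => fun _ => C0
  | S m' => fun x => Cadd (rowact m' a g x) (act (a m') (g m') x)
  end.

(* Main.v *)
Require Import Defs.
From Stdlib Require Import Reals List.
From Stdlib Require Import Lra Lia ClassicalEpsilon FunctionalExtensionality.
Open Scope R_scope.

Ltac cring := unfold Cmul, Cadd, Cneg, C0, Defs.C1, RtoC; apply injective_projections; simpl; ring.

Lemma upd0 x i : upd x i 0 = x.
Proof. apply functional_extensionality; intro j; unfold upd; destruct (Nat.eqb j i); ring. Qed.

Lemma upd_upd x i t s : upd (upd x i t) i s = upd x i (t + s).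
Proof. apply functional_extensionality; intro j; unfold upd; destruct (Nat.eqb j i); ring. Qed.

Lemma has_pd_unique f i x l1 l2 : has_pd f i x l1 -> has_pd f i x l2 -> l1 = l2.
Proof. intros [a b] [c d]. apply injective_projections; eapply uniqueness_limite; eauto. Qed.

Lemma pd_correct f i x : (exists l, has_pd f i x l) -> has_pd f i x (pd f i x).
Proof. intros E. unfold pd. exact (epsilon_spec (inhabits C0) (has_pd f i x) E). Qed.

Lemma pd_spec f i x l : has_pd f i x l -> pd f i x = l.
Proof. intros H. eapply has_pd_unique; [apply pd_correct; eauto | eauto]. Qed.

Lemma has_pd_ext f g i x l l' : (forall y, f y = g y) -> l = l' -> has_pd f i x l -> has_pd g i x l'.
Proof. intros E El H. subst l'. replace g with f; auto. apply functional_extensionality; auto. Qed.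

Lemma has_pd_const c i x : has_pd (fun _ => c) i x C0.
Proof. split; simpl; apply (derivable_pt_lim_const). Qed.

Lemma has_pd_add f g i x a b : has_pd f i x a -> has_pd g i x b ->
  has_pd (fun y => Cadd (f y) (g y)) i x (Cadd a b).
Proof. intros [H1 H2] [H3 H4]; split; simpl;
  [apply (derivable_pt_lim_plus _ _ _ _ _ H1 H3) | apply (derivable_pt_lim_plus _ _ _ _ _ H2 H4)]. Qed.

Lemma dlim_ext F x l l' : l = l' -> derivable_pt_lim F x l -> derivable_pt_lim F x l'.
Proof. intros; subst; auto. Qed.

Lemma has_pd_mul f g i x a b : has_pd f i x a -> has_pd g i x b ->
  has_pd (fun y => Cmul (f y) (g y)) i x (Cadd (Cmul a (g x)) (Cmul (f x) b)).
Proof.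
  intros [H1 H2] [H3 H4].
  pose proof (derivable_pt_lim_mult _ _ _ _ _ H1 H3) as P1.
  pose proof (derivable_pt_lim_mult _ _ _ _ _ H1 H4) as P2.
  pose proof (derivable_pt_lim_mult _ _ _ _ _ H2 H3) as P3.
  pose proof (derivable_pt_lim_mult _ _ _ _ _ H2 H4) as P4.
  cbv beta in P1, P2, P3, P4. rewrite upd0 in P1, P2, P3, P4.
  split; simpl.
  - pose proof (derivable_pt_lim_minus _ _ _ _ _ P1 P4) as Q.
    eapply dlim_ext; [|exact Q]. ring.
  - pose proof (derivable_pt_lim_plus _ _ _ _ _ P2 P3) as Q.
    eapply dlim_ext; [|exact Q]. ring.
Qed.

Lemma has_pd_coord j i x : has_pd (fun y => RtoC (y j)) i x (RtoC (if Nat.eqb j i then 1 else 0)).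
Proof.
  split; simpl; [|apply derivable_pt_lim_const].
  unfold upd. destruct (Nat.eqb j i).
  - pose proof (derivable_pt_lim_plus _ _ _ _ _ (derivable_pt_lim_const (x j) 0) (derivable_pt_lim_id 0)) as Q.
    eapply dlim_ext; [|exact Q]. ring.
  - apply derivable_pt_lim_const.
Qed.

Lemma has_pd_scal c f i x a : has_pd f i x a -> has_pd (fun y => Cmul c (f y)) i x (Cmul c a).
Proof.
  intro H. eapply has_pd_ext; [| | apply (has_pd_mul (fun _ => c) f i x C0 a (has_pd_const c i x) H)].
  - reflexivity.
  - cring.
Qed.

Lemma has_pd_T j f i x a : has_pd f i x a ->
  has_pd (fun y => Cmul (RtoC (y j)) (f y)) i x
    (Cadd (Cmul (RtoC (if Nat.eqb j i then 1 else 0)) (f x)) (Cmul (RtoC (x j)) a)).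
Proof. intro H. apply (has_pd_mul _ _ _ _ _ _ (has_pd_coord j i x) H). Qed.

Lemma cnorm_pos z : 0 <= cnorm z.
Proof. unfold cnorm; pose proof (Rabs_pos (fst z)); pose proof (Rabs_pos (snd z)); lra. Qed.

Lemma cnorm_add a b : cnorm (Cadd a b) <= cnorm a + cnorm b.
Proof. unfold cnorm, Cadd; simpl.
  pose proof (Rabs_triang (fst a) (fst b)); pose proof (Rabs_triang (snd a) (snd b)); lra. Qed.

Lemma cnorm_mul c z : cnorm (Cmul c z) <= cnorm c * cnorm z.
Proof. unfold cnorm, Cmul; simpl.
  assert (E1: Rabs (fst c * fst z - snd c * snd z) <= Rabs (fst c) * Rabs (fst z) + Rabs (snd c) * Rabs (snd z)).
  { unfold Rminus. eapply Rle_trans; [apply Rabs_triang|]. rewrite Rabs_Ropp, !Rabs_mult. lra. }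
  assert (E2: Rabs (fst c * snd z + snd c * fst z) <= Rabs (fst c) * Rabs (snd z) + Rabs (snd c) * Rabs (fst z)).
  { eapply Rle_trans; [apply Rabs_triang|]. rewrite !Rabs_mult. lra. }
  pose proof (Rabs_pos (fst c)); pose proof (Rabs_pos (snd c)); pose proof (Rabs_pos (fst z)); pose proof (Rabs_pos (snd z)).
  nra. Qed.

Lemma cnorm_RtoC r z : cnorm (Cmul (RtoC r) z) = Rabs r * cnorm z.
Proof. unfold cnorm, Cmul, RtoC; simpl.
  replace (r * fst z - 0 * snd z) with (r * fst z) by ring.
  replace (r * snd z + 0 * fst z) with (r * snd z) by ring.
  rewrite !Rabs_mult; ring. Qed.

Lemma cnorm_zero z : cnorm z = 0 -> z = C0.
Proof. unfold cnorm; intros H. pose proof (Rabs_pos (fst z)); pose proof (Rabs_pos (snd z)).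
  destruct z as [a b]; simpl in *. unfold C0.
  assert (Rabs a = 0) by lra. assert (Rabs b = 0) by lra.
  f_equal; [destruct (Req_dec a 0) as [h|h]; [auto|exfalso; apply (Rabs_no_R0 a h); auto] | destruct (Req_dec b 0) as [h|h]; [auto|exfalso; apply (Rabs_no_R0 b h); auto]]. Qed.

Lemma cnorm_C0 : cnorm C0 = 0.
Proof. unfold cnorm, C0; simpl; rewrite Rabs_R0; ring. Qed.

Lemma cnorm_neg z : cnorm (Cneg z) = cnorm z.
Proof. unfold cnorm, Cneg; simpl; rewrite !Rabs_Ropp; ring. Qed.

Lemma cont_add n f g : cont n f -> cont n g -> cont n (fun y => Cadd (f y) (g y)).
Proof.
  intros Hf Hg x eps He.
  destruct (Hf x (eps/2)) as [d1 [Hd1 H1]]; [lra|].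
  destruct (Hg x (eps/2)) as [d2 [Hd2 H2]]; [lra|].
  exists (Rmin d1 d2); split; [apply Rmin_pos; auto|].
  intros y Hy.
  assert (A1: cnorm (Cadd (f y) (Cneg (f x))) < eps/2).
  { apply H1; intros j Hj; specialize (Hy j Hj); pose proof (Rmin_l d1 d2); lra. }
  assert (A2: cnorm (Cadd (g y) (Cneg (g x))) < eps/2).
  { apply H2; intros j Hj; specialize (Hy j Hj); pose proof (Rmin_r d1 d2); lra. }
  replace (Cadd (Cadd (f y) (g y)) (Cneg (Cadd (f x) (g x)))) with
    (Cadd (Cadd (f y) (Cneg (f x))) (Cadd (g y) (Cneg (g x)))) by cring.
  pose proof (cnorm_add (Cadd (f y) (Cneg (f x))) (Cadd (g y) (Cneg (g x)))). lra.
Qed.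

Lemma cont_const n c : cont n (fun _ => c).
Proof. intros x eps He; exists 1; split; [lra|]; intros.
  replace (Cadd c (Cneg c)) with C0 by cring. rewrite cnorm_C0; auto. Qed.

Lemma cont_scal n c f : cont n f -> cont n (fun y => Cmul c (f y)).
Proof.
  intros Hf x eps He.
  pose proof (cnorm_pos c).
  destruct (Hf x (eps / (cnorm c + 1))) as [d [Hd H1]].
  { apply Rdiv_lt_0_compat; lra. }
  exists d; split; auto; intros y Hy.
  replace (Cadd (Cmul c (f y)) (Cneg (Cmul c (f x)))) with (Cmul c (Cadd (f y) (Cneg (f x)))) by cring.
  eapply Rle_lt_trans; [apply cnorm_mul|].
  specialize (H1 y Hy). pose proof (cnorm_pos (Cadd (f y) (Cneg (f x)))).
  assert (cnorm c * cnorm (Cadd (f y) (Cneg (f x))) <= cnorm c * (eps / (cnorm c + 1))) by nra.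
  assert (cnorm c * (eps / (cnorm c + 1)) < eps).
  { apply (Rmult_lt_reg_r (cnorm c + 1)); [lra|]. replace (cnorm c * (eps / (cnorm c + 1)) * (cnorm c + 1)) with (cnorm c * eps) by (field; lra). nra. }
  lra.
Qed.

Lemma cont_T n j f : (j < n)%nat -> cont n f -> cont n (fun y => Cmul (RtoC (y j)) (f y)).
Proof.
  intros Hj Hf x eps He.
  set (K := Rabs (x j) + 1).
  assert (HK: 0 < K) by (unfold K; pose proof (Rabs_pos (x j)); lra).
  destruct (Hf x (eps / (2*K))) as [d [Hd H1]].
  { apply Rdiv_lt_0_compat; lra. }
  set (M := cnorm (f x) + 1).
  assert (HM: 0 < M) by (unfold M; pose proof (cnorm_pos (f x)); lra).
  exists (Rmin 1 (Rmin d (eps / (2*M)))); split.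
  { apply Rmin_pos; [lra|]. apply Rmin_pos; auto. apply Rdiv_lt_0_compat; lra. }
  intros y Hy.
  pose proof (Rmin_l 1 (Rmin d (eps / (2*M)))) as m1.
  pose proof (Rmin_r 1 (Rmin d (eps / (2*M)))) as m2.
  pose proof (Rmin_l d (eps / (2*M))) as m3.
  pose proof (Rmin_r d (eps / (2*M))) as m4.
  assert (A1: cnorm (Cadd (f y) (Cneg (f x))) < eps/(2*K)).
  { apply H1; intros k Hk; specialize (Hy k Hk); lra. }
  assert (Hyj := Hy j Hj).
  replace (Cadd (Cmul (RtoC (y j)) (f y)) (Cneg (Cmul (RtoC (x j)) (f x)))) with
    (Cadd (Cmul (RtoC (y j)) (Cadd (f y) (Cneg (f x)))) (Cmul (RtoC (y j - x j)) (f x))) by cring.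
  eapply Rle_lt_trans; [apply cnorm_add|]. rewrite !cnorm_RtoC.
  assert (B1: Rabs (y j) <= K).
  { unfold K. replace (y j) with (x j + (y j - x j)) by ring.
    pose proof (Rabs_triang (x j) (y j - x j)). lra. }
  assert (B2: Rabs (y j) * cnorm (Cadd (f y) (Cneg (f x))) <= K * (eps / (2*K))).
  { apply Rmult_le_compat; [apply Rabs_pos|apply cnorm_pos|exact B1|apply Rlt_le, A1]. }
  assert (B3: K * (eps / (2*K)) = eps/2) by (field; lra).
  assert (B4: Rabs (y j - x j) * cnorm (f x) <= (eps / (2*M)) * M).
  { apply Rmult_le_compat; [apply Rabs_pos|apply cnorm_pos|lra|unfold M; lra]. }
  assert (B5: (eps / (2*M)) * M = eps/2) by (field; lra).
  assert (B6: Rabs (y j - x j) * cnorm (f x) < eps/2 \/ Rabs (y j - x j) * cnorm (f x) <= eps / 2) by lra.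
  assert (B7: Rabs (y j) * cnorm (Cadd (f y) (Cneg (f x))) < eps/2 \/ cnorm (Cadd (f y) (Cneg (f x))) < eps/(2*K)) by auto.
  destruct (Req_dec (Rabs (y j)) 0) as [Z|Z].
  - rewrite Z. assert (Rabs (y j - x j) * cnorm (f x) < eps) by lra. lra.
  - assert (Rabs (y j) * cnorm (Cadd (f y) (Cneg (f x))) < Rabs (y j) * (eps/(2*K))).
    { apply Rmult_lt_compat_l; auto. pose proof (Rabs_pos (y j)); lra. }
    assert (Rabs (y j) * (eps/(2*K)) <= K * (eps/(2*K))).
    { apply Rmult_le_compat_r; auto. apply Rlt_le, Rdiv_lt_0_compat; lra. }
    lra.
Qed.

Definition diffb (f : fn) i := forall x, exists d, has_pd f i x d.

Lemma pd_add f g i : diffb f i -> diffb g i ->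
  pd (fun y => Cadd (f y) (g y)) i = fun y => Cadd (pd f i y) (pd g i y).
Proof. intros Hf Hg; apply functional_extensionality; intro x.
  apply pd_spec, has_pd_add; apply pd_correct; auto. Qed.

Lemma pd_scal c f i : diffb f i -> pd (fun y => Cmul c (f y)) i = fun y => Cmul c (pd f i y).
Proof. intros Hf; apply functional_extensionality; intro x.
  apply pd_spec, has_pd_scal; apply pd_correct; auto. Qed.

Lemma pd_const c i : pd (fun _ => c) i = fun _ => C0.
Proof. apply functional_extensionality; intro x. apply pd_spec, has_pd_const. Qed.

Lemma pd_T j f i : diffb f i -> pd (fun y => Cmul (RtoC (y j)) (f y)) i =
  fun y => Cadd (Cmul (RtoC (if Nat.eqb j i then 1 else 0)) (f y)) (Cmul (RtoC (y j)) (pd f i y)).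
Proof. intros Hf; apply functional_extensionality; intro x.
  apply pd_spec, has_pd_T; apply pd_correct; auto. Qed.

Lemma diffb_add f g i : diffb f i -> diffb g i -> diffb (fun y => Cadd (f y) (g y)) i.
Proof. intros Hf Hg x; destruct (Hf x), (Hg x); eexists; apply has_pd_add; eauto. Qed.
Lemma diffb_scal c f i : diffb f i -> diffb (fun y => Cmul c (f y)) i.
Proof. intros Hf x; destruct (Hf x); eexists; apply has_pd_scal; eauto. Qed.
Lemma diffb_T j f i : diffb f i -> diffb (fun y => Cmul (RtoC (y j)) (f y)) i.
Proof. intros Hf x; destruct (Hf x); eexists; apply has_pd_T; eauto. Qed.

Lemma upd_agree n (x y : pt) i h : (forall j, (j < n)%nat -> x j = y j) ->
  forall j, (j < n)%nat -> upd x i h j = upd y i h j.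
Proof. intros H j Hj; unfold upd; rewrite (H j Hj); auto. Qed.

Lemma supported_pd n f i : supported n f -> supported n (pd f i).
Proof.
  intros Hs x y Hxy.
  assert (E: forall h, f (upd x i h) = f (upd y i h)) by (intro h; apply Hs, upd_agree; auto).
  assert (P: has_pd f i x = has_pd f i y).
  { apply functional_extensionality; intro l; unfold has_pd.
    replace (fun h => fst (f (upd x i h))) with (fun h => fst (f (upd y i h)))
      by (apply functional_extensionality; intro h; rewrite E; auto).
    replace (fun h => snd (f (upd x i h))) with (fun h => snd (f (upd y i h)))
      by (apply functional_extensionality; intro h; rewrite E; auto).
    reflexivity. }
  unfold pd; rewrite P; reflexivity.
Qed.

Lemma iter_add n l : forall f g, iter_ok n l f -> iter_ok n l g -> iter_ok n l (fun y => Cadd (f y) (g y)).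
Proof.
  induction l as [|i l IH]; simpl; intros f g Hf Hg.
  - apply cont_add; auto.
  - destruct Hf as [Df Hf], Hg as [Dg Hg]. split.
    + apply diffb_add; auto.
    + rewrite pd_add by auto. apply IH; auto.
Qed.

Lemma iter_scal n l : forall c f, iter_ok n l f -> iter_ok n l (fun y => Cmul c (f y)).
Proof.
  induction l as [|i l IH]; simpl; intros c f Hf.
  - apply cont_scal; auto.
  - destruct Hf as [Df Hf]. split.
    + apply diffb_scal; auto.
    + rewrite pd_scal by auto. apply IH; auto.
Qed.

Lemma iter_const n l : forall c, iter_ok n l (fun _ => c).
Proof.
  induction l as [|i l IH]; simpl; intros c.
  - apply cont_const.
  - split. + intro x; eexists; apply has_pd_const. + rewrite pd_const; auto.
Qed.

Lemma smooth_const n c : smooth n (fun _ => c).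
Proof. split. - intros x y _; auto. - intros; apply iter_const. Qed.

Lemma smooth_add n f g : smooth n f -> smooth n g -> smooth n (fun y => Cadd (f y) (g y)).
Proof. intros [S1 H1] [S2 H2]; split.
  - intros x y E; rewrite (S1 x y E), (S2 x y E); auto.
  - intros; apply iter_add; auto. Qed.

Lemma smooth_scal n c f : smooth n f -> smooth n (fun y => Cmul c (f y)).
Proof. intros [S1 H1]; split.
  - intros x y E; rewrite (S1 x y E); auto.
  - intros; apply iter_scal; auto. Qed.

Lemma smooth_pd n f i : (i < n)%nat -> smooth n f -> smooth n (pd f i).
Proof. intros Hi [S1 H1]; split.
  - apply supported_pd; auto.
  - intros l Hl. assert (Forall (fun i => (i < n)%nat) (i :: l)) by (constructor; auto).
    exact (proj2 (H1 _ H)). Qed.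

Lemma smooth_diffb n f i : (i < n)%nat -> smooth n f -> diffb f i.
Proof. intros Hi [S1 H1]. assert (Forall (fun i => (i < n)%nat) (i :: nil)) by (constructor; auto).
  exact (proj1 (H1 _ H)). Qed.

Lemma smooth_cont n f : smooth n f -> cont n f.
Proof. intros [S1 H1]. apply (H1 nil); constructor. Qed.

Lemma smooth_T n j f : (j < n)%nat -> smooth n f -> smooth n (fun y => Cmul (RtoC (y j)) (f y)).
Proof.
  intros Hj Hf; split.
  - destruct Hf as [S1 _]. intros x y E. rewrite (S1 x y E), (E j Hj); auto.
  - intros l Hl. revert f Hf. induction l as [|i l IH]; intros f Hf; simpl.
    + apply cont_T; auto. apply smooth_cont; auto.
    + inversion Hl; subst. split.
      * apply diffb_T, (smooth_diffb n); auto.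
      * rewrite pd_T by (apply (smooth_diffb n); auto).
        apply iter_add.
        -- apply iter_scal. apply (proj2 Hf); auto.
        -- apply IH; auto. apply smooth_pd; auto.
Qed.

Lemma smooth_act n w f : wf n w -> smooth n f -> smooth n (act w f).
Proof.
  revert f; induction w; simpl; intros f Hw Hf.
  - apply smooth_scal; auto.
  - apply smooth_T; auto.
  - apply smooth_pd; auto.
  - destruct Hw; apply smooth_add; auto.
  - destruct Hw; auto.
Qed.

Lemma act_add n w : forall f g, wf n w -> smooth n f -> smooth n g ->
  forall x, act w (fun y => Cadd (f y) (g y)) x = Cadd (act w f x) (act w g x).
Proof.
  induction w; simpl; intros f g Hw Hf Hg x.
  - cring.
  - cring.
  - rewrite pd_add by (apply (smooth_diffb n); auto). reflexivity.
  - destruct Hw. rewrite IHw1, IHw2 by auto. cring.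
  - destruct Hw.
    replace (act w2 (fun y => Cadd (f y) (g y))) with (fun y => Cadd (act w2 f y) (act w2 g y))
      by (apply functional_extensionality; intro; rewrite IHw2; auto).
    apply IHw1; auto; apply smooth_act; auto.
Qed.

Lemma act_scal n w : forall c f, wf n w -> smooth n f ->
  forall x, act w (fun y => Cmul c (f y)) x = Cmul c (act w f x).
Proof.
  induction w; simpl; intros c0 f Hw Hf x.
  - cring.
  - cring.
  - rewrite pd_scal by (apply (smooth_diffb n); auto). reflexivity.
  - destruct Hw. rewrite IHw1, IHw2 by auto. cring.
  - destruct Hw.
    replace (act w2 (fun y => Cmul c0 (f y))) with (fun y => Cmul c0 (act w2 f y))
      by (apply functional_extensionality; intro; rewrite IHw2; auto).
    apply IHw1; auto; apply smooth_act; auto.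
Qed.

Lemma act_zero w : forall x, act w (fun _ => C0) x = C0.
Proof.
  induction w; simpl; intros x.
  - cring.
  - cring.
  - rewrite pd_const; auto.
  - rewrite IHw1, IHw2; cring.
  - replace (act w2 (fun _ => C0)) with (fun _ : pt => C0)
      by (apply functional_extensionality; intro; rewrite IHw2; auto).
    auto.
Qed.

Lemma act_poly q : is_poly q -> forall f x, act q f x = Cmul (polyfun q x) (f x).
Proof.
  unfold polyfun. induction q; simpl; intros Hq f x.
  - cring.
  - cring.
  - contradiction.
  - destruct Hq as [H H0]. rewrite (IHq1 H f x), (IHq2 H0 f x); cring.
  - destruct Hq as [H H0]. rewrite (IHq1 H (act q2 f) x), (IHq1 H (act q2 (fun _ => Defs.C1)) x), (IHq2 H0 f x); cring.
Qed.

Lemma polyfun_mul a b : is_poly a -> forall x, polyfun (WMul a b) x = Cmul (polyfun a x) (polyfun b x).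
Proof. intros Ha x. unfold polyfun at 1. simpl. rewrite act_poly; auto. Qed.

Lemma polyfun_add a b x : polyfun (WAdd a b) x = Cadd (polyfun a x) (polyfun b x).
Proof. reflexivity. Qed.

Lemma smooth_polyfun n q : wf n q -> smooth n (polyfun q).
Proof. intros; apply smooth_act; auto; apply smooth_const. Qed.

Fixpoint deg (q : wterm) : nat :=
  match q with
  | WC _ => 0 | WT _ => 1 | WD _ => 0
  | WAdd a b => Nat.max (deg a) (deg b)
  | WMul a b => (deg a + deg b)%nat
  end.

Fixpoint dterm (i : nat) (q : wterm) : wterm :=
  match q with
  | WC _ => WC C0
  | WT j => WC (if Nat.eqb j i then Defs.C1 else C0)
  | WD _ => WC C0
  | WAdd a b => WAdd (dterm i a) (dterm i b)
  | WMul a b =>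
      match deg a, deg b with
      | O, _ => WMul a (dterm i b)
      | _, O => WMul (dterm i a) b
      | _, _ => WAdd (WMul (dterm i a) b) (WMul a (dterm i b))
      end
  end.

Lemma dterm_poly i q : is_poly q -> is_poly (dterm i q).
Proof. induction q; simpl; intros; auto; try tauto.
  destruct H. destruct (deg q1), (deg q2); simpl; tauto. Qed.

Lemma dterm_wf n i q : wf n q -> wf n (dterm i q).
Proof. induction q; simpl; intros; auto; try tauto.
  destruct H. destruct (deg q1), (deg q2); simpl; tauto. Qed.

Lemma dterm_deg i q : (deg (dterm i q) <= deg q - 1)%nat.
Proof. induction q; simpl; try lia.
  destruct (deg q1) eqn:E1, (deg q2) eqn:E2; simpl; rewrite ?E1, ?E2; lia. Qed.

Lemma dterm_deg0 i q : is_poly q -> deg q = 0%nat -> forall x, polyfun (dterm i q) x = C0.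
Proof.
  induction q; intros Hq Hd x; simpl in *; try contradiction; try lia.
  - unfold polyfun; simpl; cring.
  - destruct Hq. unfold polyfun in *; simpl. rewrite IHq1, IHq2 by (auto; lia). cring.
  - destruct Hq. assert (deg q1 = 0%nat) by lia. rewrite H1.
    rewrite polyfun_mul by auto. rewrite IHq2 by (auto; lia). cring.
Qed.

Lemma has_pd_poly i q : is_poly q -> forall x, has_pd (polyfun q) i x (polyfun (dterm i q) x).
Proof.
  induction q; simpl; intros Hq x.
  - unfold polyfun; simpl. eapply has_pd_ext; [intro; reflexivity| |apply has_pd_const]. cring.
  - unfold polyfun; simpl.
    eapply has_pd_ext; [intro; reflexivity| |apply (has_pd_T i0 (fun _ => Defs.C1) i x C0), has_pd_const].
    destruct (Nat.eqb i0 i); cring.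
  - contradiction.
  - destruct Hq. unfold polyfun; simpl. apply has_pd_add; [apply IHq1|apply IHq2]; auto.
  - destruct Hq as [H1 H2].
    eapply has_pd_ext; [intro y; symmetry; apply polyfun_mul; auto| |
      apply has_pd_mul; [apply IHq1|apply IHq2]; auto].
    destruct (deg q1) eqn:E1.
    + rewrite polyfun_mul by auto. rewrite (dterm_deg0 i q1) by auto. cring.
    + destruct (deg q2) eqn:E2.
      * rewrite polyfun_mul by (apply dterm_poly; auto). rewrite (dterm_deg0 i q2) by auto. cring.
      * rewrite polyfun_add, !polyfun_mul by (auto; apply dterm_poly; auto). cring.
Qed.

Fixpoint pdn (f : fn) (i k : nat) : fn :=
  match k with O => f | S k' => pdn (pd f i) i k' end.

Lemma pdn_poly i k : forall q, is_poly q -> (deg q < k)%nat -> forall x, pdn (polyfun q) i k x = C0.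
Proof.
  induction k; intros q Hq Hd x; [lia|]. simpl.
  replace (pd (polyfun q) i) with (polyfun (dterm i q))
    by (apply functional_extensionality; intro y; symmetry; apply pd_spec, has_pd_poly; auto).
  destruct k.
  - simpl. apply dterm_deg0; auto; lia.
  - apply IHk. apply dterm_poly; auto. pose proof (dterm_deg i q). lia.
Qed.

Fixpoint Dk (i k : nat) : wterm :=
  match k with O => WC Defs.C1 | S k' => WMul (Dk i k') (WD i) end.

Lemma act_Dk i k : forall f x, act (Dk i k) f x = pdn f i k x.
Proof. induction k; intros f x; simpl. - cring. - apply IHk. Qed.

Lemma Dk_wf n i k : (i < n)%nat -> wf n (Dk i k).
Proof. induction k; simpl; auto. Qed.

Lemma shift_lim (F : R -> R) t l : derivable_pt_lim (fun h => F (t + h)) 0 l -> derivable_pt_lim F t l.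
Proof.
  intros H eps He. destruct (H eps He) as [d Hd]. exists d. intros h h0 hd.
  specialize (Hd h h0 hd). rewrite Rplus_0_l, Rplus_0_r in Hd. exact Hd.
Qed.

Lemma has_pd_line f i x t l : has_pd f i (upd x i t) l ->
  derivable_pt_lim (fun s => fst (f (upd x i s))) t (fst l) /\
  derivable_pt_lim (fun s => snd (f (upd x i s))) t (snd l).
Proof.
  intros [H1 H2]. split; apply shift_lim;
  [ replace (fun h => fst (f (upd x i (t + h)))) with (fun h => fst (f (upd (upd x i t) i h)))
  | replace (fun h => snd (f (upd x i (t + h)))) with (fun h => snd (f (upd (upd x i t) i h))) ];
  auto; apply functional_extensionality; intro h; rewrite upd_upd; auto.
Qed.

Lemma const_interval (F : R -> R) a b : (forall t, a < t < b -> derivable_pt_lim F t 0) ->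
  forall s t, a < s < b -> a < t < b -> F s = F t.
Proof.
  intros H.
  assert (K: forall s t, a < s < b -> a < t < b -> s < t -> F s = F t).
  { intros s t Hs Ht st.
    destruct (MVT_cor2 F (fun _ => 0) s t st) as [c [Hc _]].
    - intros c Hc; apply H; lra.
    - lra. }
  intros s t Hs Ht. destruct (Rlt_or_le s t) as [h|h].
  - auto.
  - destruct (Req_dec s t) as [e|e]; [subst; auto|]. symmetry; apply K; auto; lra.
Qed.

Lemma lim_loc_zero (F : R -> R) d : 0 < d -> (forall h, Rabs h < d -> F h = 0) -> derivable_pt_lim F 0 0.
Proof.
  intros Hd H eps He. exists (mkposreal d Hd). intros h h0 hh. simpl in hh.
  rewrite Rplus_0_l, (H h hh), (H 0) by (rewrite Rabs_R0; lra).
  replace ((0 - 0) / h - 0) with 0 by (field; auto). rewrite Rabs_R0. lra.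
Qed.

Lemma line_vanish n i N : (i < n)%nat -> forall f, smooth n f -> (forall y, pdn f i N y = C0) ->
  forall x a b, a < b -> (forall t, a < t < b -> f (upd x i t) = C0) -> forall t, f (upd x i t) = C0.
Proof.
  intros Hi. induction N as [|N IH]; intros f Hf HN x a b ab Hz t.
  - apply HN.
  - simpl in HN.
    assert (Dz: forall t, a < t < b -> pd f i (upd x i t) = C0).
    { intros s Hs. apply pd_spec.
      set (d := Rmin (s - a) (b - s)).
      assert (Hd: 0 < d) by (apply Rmin_pos; lra).
      assert (Z: forall h, Rabs h < d -> f (upd (upd x i s) i h) = C0).
      { intros h Hh. rewrite upd_upd. apply Hz. unfold d in Hh.
        pose proof (Rmin_l (s - a) (b - s)); pose proof (Rmin_r (s - a) (b - s)).
        destruct (Rcase_abs h) as [hh|hh]; [rewrite Rabs_left in Hh|rewrite Rabs_right in Hh]; lra. }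
      split; simpl; apply (lim_loc_zero _ d Hd); intros h Hh; rewrite (Z h Hh); reflexivity. }
    assert (Pz := IH (pd f i) (smooth_pd n f i Hi Hf) HN x a b ab Dz).
    assert (Dl: forall s, derivable_pt_lim (fun s => fst (f (upd x i s))) s 0 /\
                          derivable_pt_lim (fun s => snd (f (upd x i s))) s 0).
    { intro s. assert (has_pd f i (upd x i s) C0).
      { rewrite <- (Pz s). apply pd_correct. apply (smooth_diffb n); auto. }
      apply (has_pd_line _ _ _ _ _ H). }
    set (m := (a + b) / 2).
    assert (Hm: a < m < b) by (unfold m; lra).
    set (lo := Rmin a t - 1). set (hi := Rmax b t + 1).
    assert (lo < m < hi /\ lo < t < hi) as [Hm' Ht'].
    { unfold lo, hi; pose proof (Rmin_l a t); pose proof (Rmin_r a t);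
      pose proof (Rmax_l b t); pose proof (Rmax_r b t); lra. }
    rewrite <- (Hz m Hm).
    apply injective_projections.
    + apply (const_interval (fun s => fst (f (upd x i s))) lo hi); auto. intros; apply Dl.
    + apply (const_interval (fun s => snd (f (upd x i s))) lo hi); auto. intros; apply Dl.
Qed.

Lemma vanish n h x0 del : smooth n h -> (forall i, (i < n)%nat -> exists N, forall y, pdn h i N y = C0) ->
  0 < del -> (forall y, (forall j, (j < n)%nat -> Rabs (y j - x0 j) < del) -> h y = C0) ->
  forall y, h y = C0.
Proof.
  intros Hs HN Hd Hbox.
  assert (K: forall k, (k <= n)%nat -> forall y, (forall j, (k <= j < n)%nat -> Rabs (y j - x0 j) < del) -> h y = C0).
  { induction k as [|k IH]; intros Hk y Hy.
    - apply Hbox; intros; apply Hy; lia.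
    - destruct (HN k) as [N HNk]; [lia|].
      rewrite <- (upd0 y k).
      apply (line_vanish n k N ltac:(lia) h Hs HNk y (x0 k - del - y k) (x0 k + del - y k)); [lra|].
      intros t Ht. apply IH; [lia|]. intros j Hj. unfold upd.
      destruct (Nat.eqb_spec j k).
      + subst. apply Rabs_def1; lra.
      + apply Hy; lia. }
  intro y. apply (K n); auto. intros; lia.
Qed.

Lemma ratio_1d (u1 u2 v1 v2 du1 du2 dv1 dv2 : R -> R) a b :
  (forall t, a < t < b -> derivable_pt_lim u1 t (du1 t) /\ derivable_pt_lim u2 t (du2 t) /\
                          derivable_pt_lim v1 t (dv1 t) /\ derivable_pt_lim v2 t (dv2 t)) ->
  (forall t, a < t < b -> v1 t * v1 t + v2 t * v2 t <> 0) ->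
  (forall t, a < t < b -> v1 t * du1 t - v2 t * du2 t = dv1 t * u1 t - dv2 t * u2 t /\
                          v1 t * du2 t + v2 t * du1 t = dv1 t * u2 t + dv2 t * u1 t) ->
  forall s, a < s < b -> u1 s = 0 -> u2 s = 0 -> forall t, a < t < b -> u1 t = 0 /\ u2 t = 0.
Proof.
  intros Hd Hv Hr s Hs Hu1 Hu2 t Ht.
  set (rho := fun t => (u1 t * u1 t + u2 t * u2 t) / (v1 t * v1 t + v2 t * v2 t)).
  assert (Drho: forall t, a < t < b -> derivable_pt_lim rho t 0).
  { intros r Hr'. destruct (Hd r Hr') as [D1 [D2 [D3 D4]]].
    pose proof (derivable_pt_lim_plus _ _ _ _ _ (derivable_pt_lim_mult _ _ _ _ _ D1 D1)
                 (derivable_pt_lim_mult _ _ _ _ _ D2 D2)) as N.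
    pose proof (derivable_pt_lim_plus _ _ _ _ _ (derivable_pt_lim_mult _ _ _ _ _ D3 D3)
                 (derivable_pt_lim_mult _ _ _ _ _ D4 D4)) as M.
    pose proof (derivable_pt_lim_div _ _ _ _ _ N M) as Q.
    cbv beta in Q. unfold plus_fct, mult_fct in Q.
    specialize (Q (Hv r Hr')).
    unfold rho. eapply dlim_ext; [|exact Q].
    destruct (Hr r Hr') as [e1 e2].
    assert (Id: (du1 r * u1 r + u1 r * du1 r + (du2 r * u2 r + u2 r * du2 r)) *
                (v1 r * v1 r + v2 r * v2 r) -
                (dv1 r * v1 r + v1 r * dv1 r + (dv2 r * v2 r + v2 r * dv2 r)) *
                (u1 r * u1 r + u2 r * u2 r) =
                2 * (((v1 r * du1 r - v2 r * du2 r) - (dv1 r * u1 r - dv2 r * u2 r)) * (v1 r * u1 r - v2 r * u2 r) +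
                 ((v1 r * du2 r + v2 r * du1 r) - (dv1 r * u2 r + dv2 r * u1 r)) * (v1 r * u2 r + v2 r * u1 r)))
      by ring.
    rewrite e1, e2 in Id. unfold Rdiv. rewrite Id. ring. }
  assert (R0: rho s = 0) by (unfold rho; rewrite Hu1, Hu2; unfold Rdiv; ring).
  assert (Rt: rho t = 0) by (rewrite (const_interval rho a b Drho t s Ht Hs); auto).
  unfold rho in Rt. specialize (Hv t Ht).
  assert (u1 t * u1 t + u2 t * u2 t = 0).
  { apply (Rmult_eq_reg_r (/ (v1 t * v1 t + v2 t * v2 t))).
    - rewrite Rmult_0_l; exact Rt.
    - apply Rinv_neq_0_compat; auto. }
  split; nra.
Qed.

Definition zpath (x0 y : pt) (k : nat) : pt := fun j => if Nat.ltb j k then y j else x0 j.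

Lemma zpath0 x0 y : zpath x0 y 0 = x0.
Proof. apply functional_extensionality; intro j; reflexivity. Qed.

Lemma zpathS x0 y k : zpath x0 y (S k) = upd (zpath x0 y k) k (y k - x0 k).
Proof. apply functional_extensionality; intro j; unfold zpath, upd.
  destruct (Nat.eqb_spec j k).
  - subst. rewrite Nat.ltb_irrefl. replace (k <? S k)%nat with true by (symmetry; apply Nat.ltb_lt; lia). ring.
  - destruct (Nat.ltb_spec j (S k)), (Nat.ltb_spec j k); auto; lia.
Qed.

Lemma local_box n h Q x0 del : smooth n h -> smooth n Q -> 0 < del ->
  (forall y, (forall j, (j < n)%nat -> Rabs (y j - x0 j) < del) -> Q y <> C0) ->
  (forall i, (i < n)%nat -> forall y, Cmul (Q y) (pd h i y) = Cmul (pd Q i y) (h y)) ->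
  h x0 = C0 ->
  forall y, (forall j, (j < n)%nat -> Rabs (y j - x0 j) < del) -> h y = C0.
Proof.
  intros Hh HQ Hd HQnz Hrel Hx0 y Hy.
  assert (K: forall k, (k <= n)%nat -> h (zpath x0 y k) = C0).
  { induction k as [|k IH]; intros Hk.
    - rewrite zpath0; auto.
    - rewrite zpathS. set (x := zpath x0 y k).
      assert (Inb: forall t, -del < t < del -> forall j, (j < n)%nat -> Rabs (upd x k t j - x0 j) < del).
      { intros t Ht j Hj. unfold x, upd, zpath.
        destruct (Nat.eqb_spec j k).
        - subst. rewrite Nat.ltb_irrefl. apply Rabs_def1; lra.
        - destruct (Nat.ltb_spec j k); [apply Hy; auto|]. unfold Rminus; rewrite Rplus_opp_r, Rabs_R0; auto. }
      assert (Dh: forall t, has_pd h k (upd x k t) (pd h k (upd x k t)))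
        by (intro; apply pd_correct, (smooth_diffb n); auto; lia).
      assert (DQ: forall t, has_pd Q k (upd x k t) (pd Q k (upd x k t)))
        by (intro; apply pd_correct, (smooth_diffb n); auto; lia).
      pose proof (ratio_1d (fun t => fst (h (upd x k t))) (fun t => snd (h (upd x k t)))
                            (fun t => fst (Q (upd x k t))) (fun t => snd (Q (upd x k t)))
                            (fun t => fst (pd h k (upd x k t))) (fun t => snd (pd h k (upd x k t)))
                            (fun t => fst (pd Q k (upd x k t))) (fun t => snd (pd Q k (upd x k t)))
                            (-del) del) as R.
      assert (Hdk: -del < y k - x0 k < del) by (destruct (Rabs_def2 _ _ (Hy k ltac:(lia))); split; lra).
      assert (A1: forall t, -del < t < del ->
        derivable_pt_lim (fun t => fst (h (upd x k t))) t (fst (pd h k (upd x k t))) /\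
        derivable_pt_lim (fun t => snd (h (upd x k t))) t (snd (pd h k (upd x k t))) /\
        derivable_pt_lim (fun t => fst (Q (upd x k t))) t (fst (pd Q k (upd x k t))) /\
        derivable_pt_lim (fun t => snd (Q (upd x k t))) t (snd (pd Q k (upd x k t)))).
      { intros t _; destruct (has_pd_line _ _ _ _ _ (Dh t)), (has_pd_line _ _ _ _ _ (DQ t)); tauto. }
      assert (A2: forall t, -del < t < del ->
        fst (Q (upd x k t)) * fst (Q (upd x k t)) + snd (Q (upd x k t)) * snd (Q (upd x k t)) <> 0).
      { intros t Ht Z; apply (HQnz (upd x k t) (Inb t Ht)).
        destruct (Q (upd x k t)) as [q1 q2]; simpl in Z; unfold C0; f_equal; nra. }
      assert (A3: forall t, -del < t < del ->
        fst (Q (upd x k t)) * fst (pd h k (upd x k t)) - snd (Q (upd x k t)) * snd (pd h k (upd x k t)) =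
        fst (pd Q k (upd x k t)) * fst (h (upd x k t)) - snd (pd Q k (upd x k t)) * snd (h (upd x k t)) /\
        fst (Q (upd x k t)) * snd (pd h k (upd x k t)) + snd (Q (upd x k t)) * fst (pd h k (upd x k t)) =
        fst (pd Q k (upd x k t)) * snd (h (upd x k t)) + snd (pd Q k (upd x k t)) * fst (h (upd x k t))).
      { intros t Ht; pose proof (Hrel k ltac:(lia) (upd x k t)) as E.
        unfold Cmul in E; injection E; intros; split; lra. }
      assert (A4: h (upd x k 0) = C0) by (rewrite upd0; fold x; apply IH; lia).
      destruct (R A1 A2 A3 0 ltac:(lra)
                  ltac:(cbv beta; rewrite A4; reflexivity) ltac:(cbv beta; rewrite A4; reflexivity)
                  (y k - x0 k) Hdk) as [Z1 Z2].
      apply injective_projections; simpl; auto. }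
  rewrite <- (K n ltac:(lia)). destruct Hh as [Sh _]. apply Sh.
  intros j Hj; unfold zpath. destruct (Nat.ltb_spec j n); auto; lia.
Qed.

Lemma rowact_ext m a b g g' : (forall j, (j < m)%nat -> forall x, act (a j) (g j) x = act (b j) (g' j) x) ->
  forall x, rowact m a g x = rowact m b g' x.
Proof. induction m; simpl; intros H x; auto. rewrite IHm, H; auto. Qed.

Lemma rowact_add3 m a b c g : (forall j, (j < m)%nat -> forall x, act (a j) (g j) x = Cadd (act (b j) (g j) x) (act (c j) (g j) x)) ->
  forall x, rowact m a g x = Cadd (rowact m b g x) (rowact m c g x).
Proof. induction m; simpl; intros H x. - cring. - rewrite IHm, H by auto. cring. Qed.

Lemma rowact_zero m a g : (forall j, (j < m)%nat -> forall x, act (a j) (g j) x = C0) -> forall x, rowact m a g x = C0.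
Proof. induction m; simpl; intros H x; auto. rewrite IHm, H by auto. cring. Qed.

Definition single (j1 : nat) (t : wterm) : nat -> wterm := fun j => if Nat.eqb j j1 then t else WC C0.

Lemma rowact_single m j1 t g : (j1 < m)%nat -> forall x, rowact m (single j1 t) g x = act t (g j1) x.
Proof.
  induction m; simpl; intros H x; [lia|].
  unfold single at 2. destruct (Nat.eqb_spec m j1).
  - subst. rewrite rowact_zero. + cring.
    + intros j Hj y. unfold single. destruct (Nat.eqb_spec j j1); [lia|]. simpl; cring.
  - rewrite IHm by lia. simpl; cring.
Qed.

Lemma single_wf n j1 t : wf n t -> forall j, wf n (single j1 t j).
Proof. intros H j; unfold single; destruct (Nat.eqb j j1); simpl; auto. Qed.

Lemma rowact_smooth n m a g : (forall j, (j < m)%nat -> wf n (a j) /\ smooth n (g j)) -> smooth n (rowact m a g).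
Proof. induction m; simpl; intros H. - apply smooth_const.
  - apply smooth_add; [apply IHm; auto|]. destruct (H m); auto. apply smooth_act; auto. Qed.

Lemma rowact_mul n m w R g : wf n w -> (forall j, (j < m)%nat -> wf n (R j) /\ smooth n (g j)) ->
  forall x, rowact m (fun j => WMul w (R j)) g x = act w (rowact m R g) x.
Proof.
  induction m; simpl; intros Hw H x.
  - symmetry; apply act_zero.
  - rewrite IHm by auto. destruct (H m) as [H1 H2]; auto.
    rewrite (act_add n w (rowact m R g) (act (R m) (g m))); auto.
    + apply rowact_smooth; auto.
    + apply smooth_act; auto.
Qed.

Lemma rowact_scal n m a c g : (forall j, (j < m)%nat -> wf n (a j) /\ smooth n (g j)) ->
  forall x, rowact m a (fun j y => Cmul c (g j y)) x = Cmul c (rowact m a g x).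
Proof.
  induction m; simpl; intros H x. - cring.
  - rewrite IHm by auto. destruct (H m); auto. rewrite (act_scal n); auto. cring.
Qed.

Definition Cinv (z : Cpx) : Cpx :=
  (fst z / (fst z * fst z + snd z * snd z), - snd z / (fst z * fst z + snd z * snd z)).

Lemma Cinv_r z : z <> C0 -> Cmul z (Cinv z) = Defs.C1.
Proof.
  intros H. destruct z as [a b].
  assert (a * a + b * b <> 0).
  { intro Z. apply H. unfold C0. f_equal; nra. }
  unfold Cmul, Cinv, Defs.C1; simpl. f_equal; field; auto.
Qed.

Lemma Ccancel q z : q <> C0 -> Cmul q z = C0 -> z = C0.
Proof.
  intros Hq Hz.
  replace z with (Cmul (Cmul q z) (Cinv q)).
  - rewrite Hz; cring.
  - replace (Cmul (Cmul q z) (Cinv q)) with (Cmul z (Cmul q (Cinv q))) by cring.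
    rewrite Cinv_r by auto. cring.
Qed.

Lemma Csolve a c b : Cadd a (Cmul (Cneg c) b) = C0 -> a = Cmul c b.
Proof.
  intros H. destruct a as [a1 a2]. unfold Cadd, Cmul, Cneg, C0 in *; simpl in *.
  injection H; intros; f_equal; lra.
Qed.

Lemma kill n m r (p : nat -> wterm) (Rm : nat -> nat -> wterm) g :
  (forall k j, (k < r)%nat -> (j < m)%nat -> wf n (Rm k j)) ->
  (forall a : nat -> wterm,
     (forall j, (j < m)%nat -> wf n (a j)) ->
     (forall x, rowact m a (fun j => polyfun (p j)) x = C0) ->
     exists w : nat -> wterm,
       (forall k, (k < r)%nat -> wf n (w k)) /\
       forall j, (j < m)%nat -> weq n (a j) (wsum r (fun k => WMul (w k) (Rm k j)))) ->
  (forall j, (j < m)%nat -> smooth n (g j)) ->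
  (forall k, (k < r)%nat -> forall x, rowact m (Rm k) g x = C0) ->
  forall a, (forall j, (j < m)%nat -> wf n (a j)) ->
     (forall x, rowact m a (fun j => polyfun (p j)) x = C0) ->
     forall x, rowact m a g x = C0.
Proof.
  intros HR Hgen Hg HRg a Ha Hap x.
  destruct (Hgen a Ha Hap) as [w [Hw Hweq]].
  rewrite (rowact_ext m a (fun j => wsum r (fun k => WMul (w k) (Rm k j))) g g)
    by (intros j Hj y; apply Hweq; auto).
  assert (K: forall r', (r' <= r)%nat -> rowact m (fun j => wsum r' (fun k => WMul (w k) (Rm k j))) g x = C0).
  { induction r' as [|r' IH]; intros Hr'.
    - apply rowact_zero. intros; simpl; cring.
    - rewrite (rowact_add3 m _ (fun j => wsum r' (fun k => WMul (w k) (Rm k j))) (fun j => WMul (w r') (Rm r' j)) g)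
        by (intros; reflexivity).
      rewrite IH by lia.
      assert (Hw': wf n (w r')) by (apply Hw; lia).
      assert (HH: forall j, (j < m)%nat -> wf n (Rm r' j) /\ smooth n (g j)) by (intros; split; [apply HR; auto; lia | auto]).
      rewrite (rowact_mul n m (w r') (Rm r') g Hw' HH).
      replace (rowact m (Rm r') g) with (fun _ : pt => C0)
        by (apply functional_extensionality; intro; symmetry; apply HRg; lia).
      rewrite act_zero. cring. }
  apply K; auto.
Qed.

Theorem theorem5p2 (n m r : nat) (p : nat -> wterm) (Rm : nat -> nat -> wterm) :
  (forall j, (j < m)%nat -> wf n (p j) /\ is_poly (p j)) ->
  (exists j x, (j < m)%nat /\ polyfun (p j) x <> C0) ->
  (forall k j, (k < r)%nat -> (j < m)%nat -> wf n (Rm k j)) ->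
  (forall k, (k < r)%nat -> forall x, rowact m (Rm k) (fun j => polyfun (p j)) x = C0) ->
  (forall a : nat -> wterm,
     (forall j, (j < m)%nat -> wf n (a j)) ->
     (forall x, rowact m a (fun j => polyfun (p j)) x = C0) ->
     exists w : nat -> wterm,
       (forall k, (k < r)%nat -> wf n (w k)) /\
       forall j, (j < m)%nat -> weq n (a j) (wsum r (fun k => WMul (w k) (Rm k j)))) ->
  forall g : nat -> fn,
    (forall j, (j < m)%nat -> smooth n (g j)) ->
    ((forall k, (k < r)%nat -> forall x, rowact m (Rm k) g x = C0) <->
     exists c : Cpx, forall j, (j < m)%nat -> forall x, g j x = Cmul c (polyfun (p j) x)).
Proof.
  intros Hp Hnz HR Hker Hgen g Hg. split.
  2:{ intros [c Hc] k Hk x.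
      rewrite (rowact_ext m (Rm k) (Rm k) g (fun j y => Cmul c (polyfun (p j) y))).
      - rewrite (rowact_scal n m (Rm k) c (fun j => polyfun (p j))).
        + rewrite Hker by auto. cring.
        + intros j Hj; split; [apply HR; auto|]. apply smooth_polyfun, Hp; auto.
      - intros j Hj y. replace (g j) with (fun y => Cmul c (polyfun (p j) y)); auto.
        apply functional_extensionality; intro; symmetry; apply Hc; auto. }
  intros HRg.
  pose proof (kill n m r p Rm g HR Hgen Hg HRg) as KL.
  destruct Hnz as [j0 [x0 [Hj0 Hq0]]].
  set (q := p j0). set (Q := polyfun q). set (Gf := g j0).
  assert (Hq: wf n q /\ is_poly q) by (apply Hp; auto).
  assert (SQ: smooth n Q) by (apply smooth_polyfun; tauto).
  assert (SG: smooth n Gf) by (apply Hg; auto).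
  assert (B1: forall j, (j < m)%nat -> forall i, (i < n)%nat -> forall y, pdn (g j) i (S (deg (p j))) y = C0).
  { intros j Hj i Hi y. rewrite <- act_Dk.
    rewrite <- (rowact_single m j (Dk i (S (deg (p j)))) g) by auto.
    apply KL.
    - intros; apply single_wf, Dk_wf; auto.
    - intro x. rewrite rowact_single by auto. rewrite act_Dk. apply pdn_poly; [apply Hp; auto | lia]. }
  assert (B2: forall i, (i < n)%nat -> forall y, Cmul (Q y) (pd Gf i y) = Cmul (pd Q i y) (Gf y)).
  { intros i Hi y.
    set (t2 := WAdd (WMul q (WD i)) (WMul (WC (Cneg Defs.C1)) (dterm i q))).
    assert (At2: forall f x, act t2 f x = Cadd (Cmul (Q x) (pd f i x)) (Cneg (Cmul (pd Q i x) (f x)))).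
    { intros f x. unfold t2; simpl. rewrite !act_poly by (try apply dterm_poly; tauto).
      rewrite (pd_spec Q i x (polyfun (dterm i q) x)) by (apply has_pd_poly; tauto).
      fold Q. cring. }
    assert (E := KL (single j0 t2)).
    assert (Hwt: wf n t2) by (unfold t2; simpl; repeat split; try tauto; apply dterm_wf; tauto).
    specialize (E ltac:(intros; apply single_wf; auto)).
    specialize (E ltac:(intro x; rewrite rowact_single by auto; rewrite At2; fold q; fold Q; cring) y).
    rewrite rowact_single in E by auto.
    rewrite At2 in E. fold Gf in E.
    destruct (Q y), (pd Gf i y), (pd Q i y), (Gf y). unfold Cadd, Cmul, Cneg, C0 in *; simpl in *.
    injection E; intros; f_equal; lra. }
  assert (HQ0: Q x0 <> C0) by exact Hq0.
  set (c := Cmul (Gf x0) (Cinv (Q x0))).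
  assert (Hpos: 0 < cnorm (Q x0)).
  { destruct (Rle_lt_or_eq_dec 0 (cnorm (Q x0)) (cnorm_pos _)) as [h|h]; auto.
    exfalso; apply HQ0, cnorm_zero; auto. }
  destruct (smooth_cont n Q SQ x0 (cnorm (Q x0)) Hpos) as [del [Hdel Hcont]].
  assert (Qnz: forall y, (forall j, (j < n)%nat -> Rabs (y j - x0 j) < del) -> Q y <> C0).
  { intros y Hy Z. specialize (Hcont y Hy). rewrite Z in Hcont.
    replace (Cadd C0 (Cneg (Q x0))) with (Cneg (Q x0)) in Hcont by cring.
    rewrite cnorm_neg in Hcont. lra. }
  set (h := fun j y => Cadd (g j y) (Cmul (Cneg c) (polyfun (p j) y))).
  assert (Sh: forall j, (j < m)%nat -> smooth n (h j)).
  { intros j Hj. apply smooth_add; [apply Hg; auto|]. apply smooth_scal, smooth_polyfun, Hp; auto. }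
  assert (Nh: forall j, (j < m)%nat -> forall i, (i < n)%nat -> exists N, forall y, pdn (h j) i N y = C0).
  { intros j Hj i Hi. exists (S (deg (p j))). intro y.
    rewrite <- act_Dk. unfold h.
    rewrite (act_add n); [| apply Dk_wf; auto | apply Hg; auto | apply smooth_scal, smooth_polyfun, Hp; auto].
    rewrite (act_scal n); [| apply Dk_wf; auto | apply smooth_polyfun, Hp; auto].
    rewrite !act_Dk, B1, pdn_poly by (auto; try apply Hp; auto; lia). cring. }
  assert (L0: forall y, (forall j, (j < n)%nat -> Rabs (y j - x0 j) < del) -> h j0 y = C0).
  { apply (local_box n (h j0) Q x0 del (Sh j0 Hj0) SQ Hdel Qnz).
    - intros i Hi y. unfold h. fold q Q Gf.
      rewrite pd_add by (try apply diffb_scal; apply (smooth_diffb n); auto).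
      rewrite pd_scal by (apply (smooth_diffb n); auto).
      replace (Cmul (Q y) (Cadd (pd Gf i y) (Cmul (Cneg c) (pd Q i y)))) with
        (Cadd (Cmul (Q y) (pd Gf i y)) (Cmul (Cneg c) (Cmul (pd Q i y) (Q y)))) by cring.
      rewrite B2 by auto. cring.
    - unfold h. fold q Q Gf. unfold c.
      replace (Cadd (Gf x0) (Cmul (Cneg (Cmul (Gf x0) (Cinv (Q x0)))) (Q x0))) with
        (Cadd (Gf x0) (Cneg (Cmul (Gf x0) (Cmul (Q x0) (Cinv (Q x0)))))) by cring.
      rewrite Cinv_r by auto. cring. }
  assert (Lj: forall j, (j < m)%nat -> forall y, (forall i, (i < n)%nat -> Rabs (y i - x0 i) < del) -> h j y = C0).
  { intros j Hj y Hy. destruct (Nat.eq_dec j j0) as [e|e]; [subst; auto|].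
    assert (E := KL (fun j' => if Nat.eqb j' j then q else if Nat.eqb j' j0 then WMul (WC (Cneg Defs.C1)) (p j) else WC C0)).
    assert (Dec: forall gg : nat -> fn, forall x,
       rowact m (fun j' => if Nat.eqb j' j then q else if Nat.eqb j' j0 then WMul (WC (Cneg Defs.C1)) (p j) else WC C0) gg x
       = Cadd (act q (gg j) x) (act (WMul (WC (Cneg Defs.C1)) (p j)) (gg j0) x)).
    { intros gg x. rewrite (rowact_add3 m _ (single j q) (single j0 (WMul (WC (Cneg Defs.C1)) (p j)))).
      - rewrite !rowact_single by auto. reflexivity.
      - intros j' Hj' x'. unfold single. destruct (Nat.eqb_spec j' j), (Nat.eqb_spec j' j0); subst; simpl; try lia; cring. }
    specialize (E ltac:(intros j' Hj'; cbv beta; destruct (Nat.eqb j' j); [exact (proj1 Hq)|]; destruct (Nat.eqb j' j0); simpl; [split; auto; apply Hp; auto | auto])).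
    specialize (E ltac:(intro x; rewrite Dec; simpl; rewrite !act_poly by (try apply Hp; tauto); fold q; cring) y).
    rewrite Dec in E.
    simpl in E. rewrite !act_poly in E by (try apply Hp; tauto). fold q Q Gf in E.
    assert (HG: Gf y = Cmul c (Q y)) by (apply Csolve; apply L0; auto).
    rewrite HG in E.
    apply (Ccancel (Q y)); [apply Qnz; auto|].
    unfold h. rewrite <- E. cring. }
  exists c. intros j Hj x. apply Csolve.
  apply (vanish n (h j) x0 del (Sh j Hj) (Nh j Hj) Hdel (Lj j Hj)).
Qed.
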